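(* Let $G=(V,E)$ be a finite simple undirected graph with $N\ge1$ vertices and put $G_0=G$. Then there exists a sequence of induced subgraphs $G_0\supseteq G_1\supseteq\cdots\supseteq G_N$, where $G_N$ is the graph with no vertices and, for each $i=0,\dots,N-1$, $G_{i+1}$ is obtained from $G_i$ by deleting one vertex, such that $C(G_i)\ge C(G_{i+1})$ for all $i=0,\dots,N-1$.
   Context: For a vertex $u$ of a graph, $d_u$ is its degree and $T(u)$ the number of triangles containing $u$; the local clustering coefficient is $C(u)=\frac{2T(u)}{d_u(d_u-1)}$ if $d_u>1$ and $C(u)=0$ otherwise. The average clustering coefficient of a graph $H$ with $n\ge1$ vertices is $C(H)=\frac1n\sum_{u\in V(H)}C(u)$ (local coefficients computed in $H$); by convention the graph with no vertices has $C=0$. *)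

(* Defs.v *)
From HB Require Import structures.
From mathcomp Require Import all_boot all_order all_algebra.
Set Implicit Arguments. Unset Strict Implicit. Unset Printing Implicit Defensive.
Import Order.TTheory GRing.Theory Num.Theory.

(* A finite simple undirected graph: vertex type T : finType, adjacency
   e : rel T, symmetric and irreflexive.  Induced subgraphs are given by
   their vertex set S : {set T}. *)

Definition simple_graph (T : finType) (e : rel T) : Prop :=
  symmetric e /\ irreflexive e.

Definition ideg (T : finType) (e : rel T) (S : {set T}) (u : T) : nat :=
  #|[set v in S | e u v]|.

Definition itri (T : finType) (e : rel T) (S : {set T}) (u : T) : nat :=
  #|[set A : {set T} | [&& A \subset [set v in S | e u v], #|A| == 2 &
                          [forall x in A, forall y in A, (x != y) ==> e x y]]]|.

Definition local_cc (T : finType) (e : rel T) (S : {set T}) (u : T) : rat :=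
  let d := ideg e S u in
  if (1 < d)%N then (2 * (itri e S u)%:R / (d%:R * (d%:R - 1)))%R else 0%R.

Definition avg_cc (T : finType) (e : rel T) (S : {set T}) : rat :=
  if #|S| == 0%N then 0%R
  else ((#|S|%:R)^-1 * \sum_(u in S) local_cc e S u)%R.

(* Main.v *)
Require Import Defs.
From HB Require Import structures.
From mathcomp Require Import all_boot all_order all_algebra.
Import Order.TTheory GRing.Theory Num.Theory.
Set Implicit Arguments. Unset Strict Implicit.

From mathcomp Require Import ring.
Section S.
Variables (T : finType) (e : rel T).

Definition clq (A : {set T}) := [forall x in A, forall y in A, (x != y) ==> e x y].
Definition PP (N : {set T}) := [set A : {set T} | [&& A \subset N, #|A| == 2 & clq A]].
Definition tri (N : {set T}) := #|PP N|.
Definition ff (N : {set T}) : rat :=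
  let d := #|N| in
  if (1 < d)%N then (2 * (tri N)%:R / (d%:R * (d%:R - 1)))%R else 0%R.
Definition nb (S : {set T}) u := [set v in S | e u v].

Lemma lcc_ff S u : local_cc e S u = ff (nb S u).
Proof. by []. Qed.

Lemma tri_del N v : tri (N :\ v) = \sum_(A in PP N) (v \notin A : nat).
Proof.
rewrite /tri -big_mkcondr /= -sum1_card; apply: eq_bigl => A.
rewrite !inE subsetD1; by case: (A \subset N); case: (v \in A); case: (_ == _); case: (clq A).
Qed.

Lemma sum_tri (N : {set T}) : \sum_(v in N) tri (N :\ v) = tri N * (#|N| - 2).
Proof.
under eq_bigr do rewrite tri_del.
rewrite exchange_big /= /tri -sum_nat_const; apply: eq_bigr => A.
rewrite inE => /and3P [sAN /eqP cA _].
transitivity #|N :\: A|.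
  rewrite -sum1_card big_mkcond [RHS]big_mkcond /=; apply: eq_bigr => v _.
  by rewrite !inE; case: (v \in A); case: (v \in N).
by rewrite -(cardsID A N) (setIidPr sAN) cA addKn.
Qed.


Lemma ff_ge0 N : (0 <= ff N)%R.
Proof.
rewrite /ff; case: ifP => // h; apply: divr_ge0; first by rewrite mulr_ge0.
move: h; case: #|N| => [|n] // _.
by rewrite -natr1 addrK natr1 mulr_ge0 ?ler0n.
Qed.

Lemma key (N : {set T}) : (\sum_(v in N) ff (N :\ v) <= #|N|%:R * ff N)%R.
Proof.
have cD v : v \in N -> #|N :\ v| = #|N|.-1 by move=> vN; rewrite (cardsD1 v N) vN.
case: (ltnP 2 #|N|) => hN; last first.
  rewrite big1 ?mulr_ge0 ?ff_ge0 // => v vN.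
  by rewrite /ff cD //; case: #|N| hN => [|[|[|]]].
have -> : (\sum_(v in N) ff (N :\ v) =
   2 * (\sum_(v in N) tri (N :\ v))%:R / ((#|N|.-1)%:R * ((#|N|.-1)%:R - 1)))%R.
  rewrite natr_sum mulr_sumr mulr_suml; apply: eq_bigr => v vN.
  by rewrite /ff cD //; case: #|N| hN => [|[|[|]]].
rewrite sum_tri /ff.
case: #|N| hN => [|[|[|k]]] // _ /=.
rewrite subn2 /= natrM.
rewrite -!natr1 !addrK le_eqVlt; apply/orP; left; apply/eqP.
have h1 : (k%:R + 1 : rat) != 0%R by rewrite natr1 pnatr_eq0.
have h2 : (k%:R + 1 + 1 : rat) != 0%R by rewrite !natr1 pnatr_eq0.
have h3 : (k%:R + 1 + 1 + 1 : rat) != 0%R by rewrite !natr1 pnatr_eq0.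
field.
by rewrite h1 h2 h3.
Qed.

Hypothesis irr : irreflexive e.

Lemma vert (S : {set T}) u : u \in S ->
  (\sum_(v in S :\ u) ff (nb (S :\ v) u) <= (#|S|.-1)%:R * ff (nb S u))%R.
Proof.
move=> uS; set N := nb S u.
have NS : N \subset S :\ u.
  apply/subsetP => v; rewrite !inE => /andP [vS euv]; rewrite vS andbT.
  by apply: contraTN euv => /eqP ->; rewrite irr.
have nbv v : v \in N -> nb (S :\ v) u = N :\ v.
  by move=> _; apply/setP => w; rewrite !inE; case: (w == v).
have nbv' v : v \notin N -> nb (S :\ v) u = N.
  move=> vN; apply/setP => w; rewrite !inE.
  case: eqP => // ->; apply/esym/negbTE; move: vN; by rewrite !inE.
rewrite (bigID (fun v => v \in N)) /=.
have -> : (\sum_(v in S :\ u | v \in N) ff (nb (S :\ v) u) = \sum_(v in N) ff (N :\ v))%R.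
  rewrite (eq_bigl (fun v => v \in N)); last first.
    by move=> v; case vN: (v \in N); rewrite ?andbF ?andbT // (subsetP NS).
  by apply: eq_bigr => v vN; rewrite nbv.
have -> : (\sum_(v in S :\ u | v \notin N) ff (nb (S :\ v) u) = ff N *+ #|(S :\ u) :\: N|)%R.
  rewrite -sumr_const (eq_bigl (fun v => v \in (S :\ u) :\: N)); last first.
    by move=> v; rewrite [in RHS]inE andbC.
  by apply: eq_bigr => v; rewrite inE => /andP [vN _]; rewrite nbv'.
have -> : #|S|.-1 = #|N| + #|(S :\ u) :\: N|.
  by rewrite -{1}(setIidPr NS) cardsID (cardsD1 u S) uS add1n.
rewrite natrD mulrDl [X in (_ <= _ + X)%R]mulr_natl.
by apply: lerD; [exact: key | exact: lexx].
Qed.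

Definition XX (S : {set T}) v := (\sum_(u in S :\ v) local_cc e (S :\ v) u)%R.
Definition SS (S : {set T}) := (\sum_(u in S) local_cc e S u)%R.

Lemma dbl (S : {set T}) : (\sum_(v in S) XX S v <= (#|S|.-1)%:R * SS S)%R.
Proof.
have -> : (\sum_(v in S) XX S v =
   \sum_(u in S) \sum_(v in S :\ u) ff (nb (S :\ v) u))%R.
  rewrite /XX.
  have E (F : T -> T -> rat) w :
      (\sum_(u in S :\ w) F w u = \sum_(u in S) if u != w then F w u else 0)%R.
    rewrite -big_mkcondr; apply: eq_bigl => u; by rewrite !inE andbC.
  under eq_bigr do rewrite (E (fun v u => local_cc e (S :\ v) u)).
  rewrite exchange_big /=; apply: eq_bigr => u _.
  rewrite (E (fun u v => ff (nb (S :\ v) u))).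
  by apply: eq_bigr => v _; rewrite eq_sym.
rewrite /SS mulr_sumr; apply: ler_sum => u uS; exact: vert.
Qed.

Lemma avg_ge0 S : (0 <= avg_cc e S)%R.
Proof.
rewrite /avg_cc; case: eqP => // _; apply: mulr_ge0; first by rewrite invr_ge0.
by apply: sumr_ge0 => u _; exact: ff_ge0.
Qed.

Lemma step (S : {set T}) : (0 < #|S|)%N ->
  exists2 v, v \in S & (avg_cc e (S :\ v) <= avg_cc e S)%R.
Proof.
move=> S0; have [u uS] : exists u, u \in S.
  by case/card_gt0P: S0 => u uS; exists u.
case: (ltnP 1 #|S|) => n1; last first.
  exists u => //.
  have -> : S :\ u = set0.
    apply/eqP; rewrite -cards_eq0; move: n1; rewrite (cardsD1 u S) uS.
    by case: #|S :\ u|.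
  by rewrite /avg_cc cards0 /= avg_ge0.
set n := #|S|.
have nz : (n%:R : rat) != 0%R by rewrite pnatr_eq0 -lt0n.
have n1z : (n.-1%:R : rat) != 0%R by rewrite pnatr_eq0 -lt0n -ltnS prednK.
have cv v : v \in S -> #|S :\ v| = n.-1 by move=> vS; rewrite /n (cardsD1 v S) vS.
set a := avg_cc e S.
have aE : a = (n%:R^-1 * SS S)%R by rewrite /a /avg_cc (negbTE (lt0n_neq0 S0)).
have [v vS h] : exists2 v, v \in S & (XX S v <= n.-1%:R * a)%R.
  case: (boolP [exists v in S, XX S v <= n.-1%:R * a]%R).
    by case/existsP => v /andP [vS h]; exists v.
  rewrite negb_exists => /forallP H.
  have lt : (\sum_(v in S) (n.-1%:R * a) < \sum_(v in S) XX S v)%R.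
    apply: ltr_sum.
      by apply/hasP; exists u => //; rewrite mem_index_enum.
    by move=> v vS; move: (H v); rewrite vS /= -ltNge.
  move: (lt_le_trans lt (dbl S)).
  move: (lt_le_trans lt (dbl S)); rewrite sumr_const -/n.
  have -> : ((n.-1%:R * a) *+ n = n.-1%:R * SS S)%R.
    rewrite aE -mulr_natr; field; exact: nz.
  by rewrite ltxx.
exists v => //.
rewrite /avg_cc cv // ifN; last by rewrite -lt0n -ltnS prednK.
by rewrite ler_pdivrMl // lt0r n1z ler0n.
Qed.

End S.

Unset Implicit Arguments.
Definition nxt {T : finType} (e : rel T) (S : {set T}) :=
  if [pick v in S | avg_cc e (S :\ v) <= avg_cc e S]%R is Some v then S :\ v else S.

Lemma nxtP {T : finType} {e : rel T} {S : {set T}} : irreflexive e -> (0 < #|S|)%N ->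
  exists2 v, v \in S & nxt e S = S :\ v /\ (avg_cc e (S :\ v) <= avg_cc e S)%R.
Proof.
move=> irr S0; rewrite /nxt; case: pickP => [v /andP [vS h] | H].
  by exists v.
have [v vS h] := step (e:=e) irr S0; move: (H v); by rewrite vS h.
Qed.

Theorem mainTheorem8 (T : finType) (e : rel T) :
  simple_graph e -> (0 < #|T|)%N ->
  exists G : nat -> {set T},
    [/\ G 0%N = [set: T], G #|T| = set0 &
        forall i, (i < #|T|)%N ->
          (exists2 v, v \in G i & G i.+1 = G i :\ v) /\
          (avg_cc e (G i.+1) <= avg_cc e (G i))%R].
Proof.
move=> [_ irr] _; exists (fun i => iter i (nxt e) [set: T]).
have C i : (i <= #|T|)%N -> #|iter i (nxt e) [set: T]| = #|T| - i.
  elim: i => [|i IH] hi; first by rewrite cardsT subn0.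
  have hi' : (i <= #|T|)%N by apply: ltnW.
  have S0 : (0 < #|iter i (nxt e) [set: T]|)%N by rewrite IH // subn_gt0.
  rewrite iterS; have [v vS [-> _]] := nxtP (e:=e) irr S0.
  move: (cardsD1 v (iter i (nxt e) [set: T])); rewrite vS IH // => E.
  by rewrite subnS E add1n.
split => //.
  by apply/eqP; rewrite -cards_eq0 C // subnn.
move=> i hi /=.
have S0 : (0 < #|iter i (nxt e) [set: T]|)%N by rewrite C ?subn_gt0 // ltnW.
have [v vS [-> h]] := nxtP (e:=e) irr S0.
by split => //; exists v.
Qed.
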